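(* The following randomized mechanism obtains a $4$-approximation to the optimal social welfare for bidders with additive valuations, i.e., for every profile of additive valuations, its expected welfare (when bidders act truthfully) is at least $\mathrm{OPT}/4$. Index the bidders in an arbitrary fixed order. Independently place each bidder in a set $S$ with probability $1/2$ and in a set $U$ otherwise. Bidders in $S$ receive nothing and report their value for each item. For each item $j$, set price $p_j=\max_{i\in S}v_{ij}$ and let $n(j)$ be the smallest index among bidders in $\arg\max_{i\in S}v_{ij}$. Then, for each $i\in U$ in an arbitrary order, bidder $i$ purchases all previously unsold items $j$ for which either $v_{ij}>p_j$, or $v_{ij}=p_j$ and $i$ has a lower index than $n(j)$.
   Context: Combinatorial auction with item set $M$ and bidder set $N$; bidder $i$ has an additive valuation: values $v_{ij}\ge0$ with $v_i(A)=\sum_{j\in A}v_{ij}$. $\mathrm{OPT}$ is the maximum over allocations of disjoint bundles $(T_1,\dots,T_n)$ of $\sum_i v_i(T_i)$. Truthful behavior of a bidder in $U$ means purchasing exactly the items described; bidders in $S$ report their true values. The expectation is over the random placement of bidders. *)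

(* Defs.v *)
From HB Require Import structures.
From mathcomp Require Import all_boot all_order all_algebra.
Set Implicit Arguments. Unset Strict Implicit. Unset Printing Implicit Defensive.
Import Order.TTheory GRing.Theory Num.Theory.
Local Open Scope ring_scope.

(* Bidders are 'I_n (indexed in the fixed order 0 < 1 < ... < n-1),
   items are 'I_m; v i j is the additive value of bidder i for item j. *)
Section Auction.
Variables (R : realFieldType) (n m : nat) (v : 'I_n -> 'I_m -> R).

Definition valuation (i : 'I_n) (A : {set 'I_m}) : R := \sum_(j in A) v i j.

(* An allocation of disjoint bundles: each item goes to at most one bidder. *)
Definition bundle (a : {ffun 'I_m -> option 'I_n}) (i : 'I_n) : {set 'I_m} :=
  [set j | a j == Some i].
Definition alloc_welfare (a : {ffun 'I_m -> option 'I_n}) : R :=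
  \sum_(i < n) valuation i (bundle a i).
Definition OPT : R :=
  \big[Num.max/0]_(a : {ffun 'I_m -> option 'I_n}) alloc_welfare a.

(* Price p_j = max_{i in S} v_ij (0 if S is empty). *)
Definition price (S : {set 'I_n}) (j : 'I_m) : R :=
  \big[Num.max/0]_(i in S) v i j.

Definition nj (S : {set 'I_n}) (j : 'I_m) : option 'I_n :=
  [pick i in S | (v i j == price S j) &&
     [forall k in S, (v k j == price S j) ==> (i <= k)%N]].

Definition qualifies (S : {set 'I_n}) (i : 'I_n) (j : 'I_m) : bool :=
  (price S j < v i j) ||
  ((v i j == price S j) && (if nj S j is Some k then (i < k)%N else false)).

Fixpoint run (S : {set 'I_n}) (s : seq 'I_n) (unsold : {set 'I_m}) : R :=
  match s with
  | [::] => 0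
  | i :: s' =>
      let B := [set j in unsold | qualifies S i j] in
      valuation i B + run S s' (unsold :\: B)
  end.

(* welfare of the mechanism for placement S, where U = ~: S is processed
   in the order ord S (a permutation of U) *)
Definition mech_welfare (ord : {set 'I_n} -> seq 'I_n) (S : {set 'I_n}) : R :=
  run S (ord S) setT.

Definition placement_prob (S : {set 'I_n}) : R :=
  (1 / 2) ^+ #|S| * (1 - 1 / 2) ^+ #|~: S|.

Definition expected_welfare (ord : {set 'I_n} -> seq 'I_n) : R :=
  \sum_(S : {set 'I_n}) placement_prob S * mech_welfare ord S.

End Auction.

(* Main.v *)
Require Import Defs.
From HB Require Import structures.
From mathcomp Require Import all_boot all_order all_algebra.
From mathcomp Require Import ring lra.
Set Implicit Arguments. Unset Strict Implicit. Unset Printing Implicit Defensive.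
Import Order.TTheory GRing.Theory Num.Theory.
Local Open Scope ring_scope.
From mathcomp Require Import ring lra.

Definition better (R : realFieldType) (n m : nat) (v : 'I_n -> 'I_m -> R)
  (j : 'I_m) (a b : 'I_n) : bool :=
  (v b j < v a j) || ((v b j == v a j) && (a <= b)%N).

Lemma better_refl (R : realFieldType) (n m : nat) (v : 'I_n -> 'I_m -> R) j a :
  better v j a a.
Proof. by rewrite /better eqxx leqnn orbT. Qed.

Lemma better_trans (R : realFieldType) (n m : nat) (v : 'I_n -> 'I_m -> R) j a b c :
  better v j a b -> better v j b c -> better v j a c.
Proof.
rewrite /better => /orP[ab|/andP[/eqP ab lab]] /orP[bc|/andP[/eqP bc lbc]].
- by rewrite (lt_trans bc ab).
- by rewrite bc ab.
- by rewrite -ab bc.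
- by rewrite bc ab eqxx (leq_trans lab lbc) orbT.
Qed.

Lemma better_total (R : realFieldType) (n m : nat) (v : 'I_n -> 'I_m -> R) j a b :
  better v j a b || better v j b a.
Proof.
rewrite /better; case: (ltgtP (v a j) (v b j)) => [||e] /=; rewrite ?orbT //.
by case: (leqP a b) => // /ltnW ->; rewrite !orbT.
Qed.

Lemma better_anti (R : realFieldType) (n m : nat) (v : 'I_n -> 'I_m -> R) j a b :
  better v j a b -> better v j b a -> a = b.
Proof.
rewrite /better => /orP[ab|/andP[/eqP ab lab]] /orP[ba|/andP[/eqP ba lba]].
- by have := lt_trans ab ba; rewrite ltxx.
- by move: ab; rewrite ba ltxx.
- by move: ba; rewrite ab ltxx.
- by apply: val_inj; apply/eqP; rewrite eqn_leq lab lba.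
Qed.

Lemma best_exists (R : realFieldType) (n m : nat) (v : 'I_n -> 'I_m -> R) j
  (s : seq 'I_n) : s != [::] ->
  exists2 x, x \in s & forall y, y \in s -> better v j x y.
Proof.
elim: s => [|a s IH] // _.
case: (eqVneq s [::]) => [->|/IH [x xs Hx]].
  by exists a; rewrite ?mem_head // => y; rewrite inE => /eqP ->; apply: better_refl.
case/orP: (better_total v j a x) => [ax|xa].
  exists a; first exact: mem_head.
  move=> y; rewrite inE => /orP[/eqP ->|ys]; first exact: better_refl.
  exact: better_trans ax (Hx y ys).
exists x; first by rewrite inE xs orbT.
by move=> y; rewrite inE => /orP[/eqP ->|ys] //; apply: Hx.
Qed.

Definition toggle (n : nat) (a : 'I_n) (S : {set 'I_n}) : {set 'I_n} :=
  if a \in S then S :\ a else a |: S.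

Lemma in_toggle (n : nat) (a x : 'I_n) S :
  (x \in toggle a S) = if x == a then a \notin S else x \in S.
Proof.
rewrite /toggle; case: (eqVneq x a) => [->|xa]; case: ifP => aS;
  by rewrite !inE ?eqxx ?aS ?(negbTE xa).
Qed.

Lemma toggleK (n : nat) (a : 'I_n) : involutive (toggle a).
Proof.
move=> S; apply/setP => x; rewrite !in_toggle.
by case: (eqVneq x a) => [->|] //; rewrite eqxx negbK.
Qed.

Fixpoint gval (R : realFieldType) (n m : nat) (v : 'I_n -> 'I_m -> R)
  (S : {set 'I_n}) (s : seq 'I_n) (j : 'I_m) : R :=
  match s with
  | [::] => 0
  | i :: s' => if qualifies v S i j then v i j else gval v S s' j
  end.

Lemma run_gval (R : realFieldType) (n m : nat) (v : 'I_n -> 'I_m -> R) S s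
  (U : {set 'I_m}) : run v S s U = \sum_(j in U) gval v S s j.
Proof.
elim: s U => [|i s IH] U /=; first by rewrite big1.
rewrite IH /valuation.
rewrite (bigID (fun j => qualifies v S i j) (mem U)) /=.
congr (_ + _).
  by symmetry; apply: eq_big => [j|j /andP[_ ->]] //; rewrite inE.
symmetry; apply: eq_big => [j|j /andP[_ /negbTE ->]] //; rewrite !inE.
by case: (j \in U); case: (qualifies v S i j).
Qed.

Lemma gval_ge0 (R : realFieldType) (n m : nat) (v : 'I_n -> 'I_m -> R)
  (v_ge0 : forall i j, 0 <= v i j) S s j : 0 <= gval v S s j.
Proof. by elim: s => [|i s IH] //=; case: ifP. Qed.

Lemma gval_one (R : realFieldType) (n m : nat) (v : 'I_n -> 'I_m -> R) S s j k :
  (forall i, i \in s -> i != k -> ~~ qualifies v S i j) ->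
  gval v S s j = if (k \in s) && qualifies v S k j then v k j else 0.
Proof.
elim: s => [|i s IH] H //=.
have H' : forall i0, i0 \in s -> i0 != k -> ~~ qualifies v S i0 j.
  by move=> i0 Hi; apply: H; rewrite inE Hi orbT.
rewrite inE; case: (eqVneq k i) => [<-|ki] /=.
  by case: ifP => // q; rewrite IH // q andbF.
have := H i (mem_head _ _); rewrite eq_sym ki => /(_ isT) /negbTE ->.
exact: IH.
Qed.
Lemma price_eq (R : realFieldType) (n m : nat) (v : 'I_n -> 'I_m -> R)
  (v_ge0 : forall i j, 0 <= v i j) j (istar i2 : 'I_n) (S : {set 'I_n}) :
  (forall k, k != istar -> better v j i2 k) -> istar \notin S -> i2 \in S ->
  price v S j = v i2 j.
Proof.
move=> H2 nS iS; apply/eqP; rewrite eq_le; apply/andP; split.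
  apply: bigmax_le => // i iS'.
  have /H2 : i != istar by apply: contraNneq nS => <-.
  by rewrite /better => /orP[/ltW //|/andP[/eqP -> _]].
exact: le_bigmax_cond.
Qed.

Lemma nj_spec (R : realFieldType) (n m : nat) (v : 'I_n -> 'I_m -> R)
  (v_ge0 : forall i j, 0 <= v i j) j (istar i2 : 'I_n) (S : {set 'I_n}) :
  (forall k, k != istar -> better v j i2 k) -> istar \notin S -> i2 \in S ->
  exists k, [/\ nj v S j = Some k, k \in S, v k j = v i2 j & (k <= i2)%N].
Proof.
move=> H2 nS iS; have pe := price_eq v_ge0 H2 nS iS.
rewrite /nj; case: pickP => [k /andP[kS /andP[/eqP kp /forall_inP Hk]]|none].
  exists k; split => //; first by rewrite kp.
  by have := Hk i2 iS; rewrite pe eqxx.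
have := none i2; rewrite iS /= pe eqxx /= => /negbT/negP; case.
apply/forall_inP => k kS; apply/implyP => /eqP e.
have /H2 : k != istar by apply: contraNneq nS => <-.
by rewrite /better e ltxx eqxx.
Qed.

Lemma qual_A (R : realFieldType) (n m : nat) (v : 'I_n -> 'I_m -> R)
  (v_ge0 : forall i j, 0 <= v i j) j (istar i2 : 'I_n) (S : {set 'I_n}) :
  (forall k, better v j istar k) ->
  (forall k, k != istar -> better v j i2 k) -> istar \notin S -> i2 \in S ->
  qualifies v S istar j /\
  (forall i, i \notin S -> i != istar -> ~~ qualifies v S i j).
Proof.
move=> Hs H2 nS iS; have pe := price_eq v_ge0 H2 nS iS.
have [k [nk kS vk ki2]] := nj_spec v_ge0 H2 nS iS.
rewrite /qualifies pe nk; split.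
  have := Hs i2; rewrite /better => /orP[-> //|/andP[/eqP e _]].
  rewrite e eqxx /=; apply/orP; right.
  have kn : k != istar by apply: contraNneq nS => <-.
  have := Hs k; rewrite /better vk e ltxx eqxx /= ltn_neqAle => ->.
  by rewrite andbT; apply: contra kn => /eqP/val_inj ->.
move=> i _ ni; have := H2 i ni; rewrite /better => /orP[lt|/andP[/eqP e le]].
  by rewrite ltNge (ltW lt) /= (lt_eqF lt).
by rewrite e ltxx eqxx /= -leqNgt (leq_trans ki2 le).
Qed.
Lemma pairing (R : realFieldType) (T : finType) (W : T -> R) (c : R) (t1 t2 : T -> T)
  (E : pred T) : involutive t1 -> involutive t2 -> (forall x, 0 <= W x) ->
  (forall x, E x -> c <= W x) ->
  (forall x, [|| E x, E (t1 x), E (t2 x) | E (t2 (t1 x))]) ->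
  #|T|%:R * c <= 4 * \sum_x W x.
Proof.
move=> t1K t2K W0 EW cov.
have e1 : \sum_x W x = \sum_x W (t1 x) := reindex_inj (inv_inj t1K).
have e2 : \sum_x W x = \sum_x W (t2 x) := reindex_inj (inv_inj t2K).
have e12 : \sum_x W x = \sum_x W (t2 (t1 x)) :=
  reindex_inj (inj_comp (inv_inj t2K) (inv_inj t1K)).
have -> : 4 * \sum_x W x = \sum_x (W x + W (t1 x) + W (t2 x) + W (t2 (t1 x))).
  by rewrite !big_split /= -e1 -e2 -e12; ring.
rewrite mulr_natl -sumr_const; apply: ler_sum => x _.
have := W0 x; have := W0 (t1 x); have := W0 (t2 x); have := W0 (t2 (t1 x)).
case/or4P: (cov x) => /EW; lra.
Qed.
Lemma item_bound (R : realFieldType) (n m : nat) (v : 'I_n -> 'I_m -> R)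
  (v_ge0 : forall i j, 0 <= v i j)
  (ord : {set 'I_n} -> seq 'I_n)
  (ord_perm : forall S : {set 'I_n}, perm_eq (ord S) (enum (~: S))) j i0 :
  #|{set 'I_n}|%:R * v i0 j <= 4 * \sum_(S : {set 'I_n}) gval v S (ord S) j.
Proof.
have memo : forall S i, (i \in ord S) = (i \notin S).
  by move=> S i; rewrite (perm_mem (ord_perm S)) mem_enum inE.
have ne1 : enum 'I_n != [::].
  by apply/eqP => e; move: (mem_enum 'I_n i0); rewrite e.
have [istar _ Hs'] := @best_exists R n m v j (enum 'I_n) ne1.
have Hs : forall k, better v j istar k by move=> k; apply: Hs'; rewrite mem_enum.
have le0 : v i0 j <= v istar j.
  by have := Hs i0; rewrite /better => /orP[/ltW //|/andP[/eqP -> _]].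
apply: le_trans (_ : #|{set 'I_n}|%:R * v istar j <= _).
  by rewrite ler_wpM2l // ler0n.
have W0 := fun S => gval_ge0 v_ge0 S (ord S) j.
case: (pickP (fun k => k != istar)) => [k kn|none].
  have ne2 : enum [set k | k != istar] != [::].
    by apply/eqP => e; move: (mem_enum [set k | k != istar] k); rewrite e inE kn.
  have [i2 i2in H2'] := @best_exists R n m v j (enum [set k | k != istar]) ne2.
  have i2n : i2 != istar by move: i2in; rewrite mem_enum inE.
  have H2 : forall k, k != istar -> better v j i2 k.
    by move=> k' k'n; apply: H2'; rewrite mem_enum inE.
  apply: (@pairing R _ (fun S => gval v S (ord S) j) (v istar j)
    (toggle istar) (toggle i2) (fun S : {set 'I_n} => (istar \notin S) && (i2 \in S))
    (@toggleK n istar) (@toggleK n i2) W0).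
    move=> S /andP[nS iS] /=.
    have [q nq] := qual_A v_ge0 Hs H2 nS iS.
    rewrite (gval_one (k := istar)); first by rewrite memo nS q.
    by move=> i; rewrite memo; apply: nq.
  move=> S /=; rewrite !in_toggle !eqxx ?(negbTE i2n) ?(eq_sym istar i2) ?(negbTE i2n).
  by case: (istar \in S); case: (i2 \in S).
apply: (@pairing R _ (fun S => gval v S (ord S) j) (v istar j)
    (toggle istar) id (fun S : {set 'I_n} => istar \notin S)
    (@toggleK n istar) (fun x => erefl) W0).
  move=> S /= nS.
  rewrite (gval_one (k := istar)); last by move=> i _; rewrite none.
  rewrite memo nS /=; case: ifP => // /negbT; rewrite /qualifies.
  have -> : price v S j = 0.
    rewrite /price big_pred0 // => i; apply/negbTE.
    by have := none i; move/negbT; rewrite negbK => /eqP ->.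
  rewrite negb_or => /andP[]; rewrite -leNgt => ?; lra.
by move=> S /=; rewrite !in_toggle eqxx; case: (istar \in S).
Qed.

Theorem lemma4p3 (R : realFieldType) (n m : nat) (v : 'I_n -> 'I_m -> R)
  (v_ge0 : forall i j, 0 <= v i j)
  (ord : {set 'I_n} -> seq 'I_n)
  (ord_perm : forall S : {set 'I_n}, perm_eq (ord S) (enum (~: S))) :
  OPT v / 4 <= expected_welfare v ord.
Proof.
have cardN : #|{set 'I_n}| = (2 ^ n)%N.
  by rewrite -cardsT -powersetT card_powerset cardsT card_ord.
set N := #|{set 'I_n}|%:R : R.
have N0 : 0 < N by rewrite /N cardN ltr0n expn_gt0.
have pp : forall S, @placement_prob R n S = N^-1.
  move=> S; rewrite /placement_prob (_ : 1 - 1 / 2 = 1 / 2 :> R); last by lra.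
  by rewrite -exprD cardsC card_ord div1r exprVn /N cardN natrX.
set W := fun S j => gval v S (ord S) j.
have W0 : forall S j, 0 <= W S j by move=> S j; apply: gval_ge0.
have mw : forall S, mech_welfare v ord S = \sum_j W S j.
  by move=> S; rewrite /mech_welfare run_gval; apply: eq_bigl => j; rewrite inE.
have Ex : expected_welfare v ord = N^-1 * \sum_j \sum_S W S j.
  rewrite /expected_welfare (eq_bigr (fun S => N^-1 * \sum_j W S j)).
    by rewrite -mulr_sumr exchange_big.
  by move=> S _; rewrite pp mw.
have Y0 : 0 <= \sum_j (4 * \sum_S W S j) / N.
  apply: sumr_ge0 => j _; apply: divr_ge0 (ltW N0).
  by apply: mulr_ge0 => //; apply: sumr_ge0 => S _.
have OPTle : OPT v <= \sum_j (4 * \sum_S W S j) / N.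
  apply: bigmax_le => // a _; rewrite /alloc_welfare /valuation.
  have -> : \sum_i \sum_(j in bundle a i) v i j =
            \sum_j \sum_i (if a j == Some i then v i j else 0).
    rewrite exchange_big /=; apply: eq_bigr => i _.
    by rewrite big_mkcond; apply: eq_bigr => j _; rewrite inE.
  apply: ler_sum => j _; case E: (a j) => [i0|].
    rewrite (bigD1 i0) //= eqxx big1 ?addr0; last first.
      by move=> i ni; case: eqP => // [[e]]; move: ni; rewrite e eqxx.
    rewrite ler_pdivlMr // mulrC; exact: item_bound.
  rewrite big1 //; apply: divr_ge0 (ltW N0).
  by apply: mulr_ge0 => //; apply: sumr_ge0 => S _.
have eY : \sum_j (4 * \sum_S W S j) / N = 4 * (N^-1 * \sum_j \sum_S W S j).
  by rewrite !mulr_sumr; apply: eq_bigr => j _; ring.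
rewrite eY in OPTle.
rewrite Ex; lra.
Qed.
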